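(* Let $P$ be a finite poset with a least element $0$ and a greatest element $1$. Then: (a) $P$ is a lattice if and only if $\Delta_\wedge(P)=0$, if and only if $\Delta_\vee(P)=0$. (b) If $\Delta_\wedge(P)\le 1$, then $v_*(x)=|\downarrow x|$ is a (isotone) lower valuation on $P$. (c) If $\Delta_\vee(P)\le 1$, then $v^*(x)=|\uparrow x|$ is an (antitone) lower valuation on $P$.
   Context: For a poset $(P,\le)$ and $x\in P$: $\downarrow x=\{x'\in P: x'\le x\}$, $\uparrow x=\{x'\in P: x\le x'\}$. For $S\subseteq P$, $\mathbf{max}(S)$ and $\mathbf{min}(S)$ denote the sets of maximal and minimal elements of $S$. Define $D_\wedge(x,y)=|\downarrow x\cap\downarrow y|-\max\{|\downarrow z|: z\in\mathbf{max}(\downarrow x\cap\downarrow y)\}$, $\Delta_\wedge(P)=\max_{x,y\in P}D_\wedge(x,y)$; $D_\vee(x,y)=|\uparrow x\cap\uparrow y|-\min\{|\uparrow z|: z\in\mathbf{min}(\uparrow x\cap\uparrow y)\}$, $\Delta_\vee(P)=\max_{x,y\in P}D_\vee(x,y)$. A function $f:P\to\mathbb{R}$ is isotone if $x\le y\Rightarrow f(x)\le f(y)$, antitone if $x\le y\Rightarrow f(x)\ge f(y)$. For a monotone $f$ define $f^-(x,y)=\sup\{f(z):z\in\downarrow x\cap\downarrow y\}$ if $f$ isotone, $\inf\{\cdot\}$ if antitone; $f^+(x,y)=\inf\{f(z):z\in\uparrow x\cap\uparrow y\}$ if $f$ isotone, $\sup\{\cdot\}$ if antitone; with $\inf\emptyset=+\infty$,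 $\sup\emptyset=-\infty$. A lower valuation is either an isotone $v$ with $\downarrow x\cap\downarrow y\neq\emptyset$ for all $x,y$, or an antitone $v$ with $\uparrow x\cap\uparrow y\neq\emptyset$ for all $x,y$, satisfying $v(x)+v(y)\le v^-(x,y)+v^+(x,y)$ for all $x,y\in P$. *)

(* Defs.v *)
From HB Require Import structures.
From mathcomp Require Import all_boot all_order all_algebra.
Set Implicit Arguments. Unset Strict Implicit. Unset Printing Implicit Defensive.
Import Order.TTheory GRing.Theory Num.Theory.

Section PosetDefs.
Variables (d : Order.disp_t) (T : finPOrderType d).

Definition down (x : T) : {set T} := [set z | (z <= x)%O].
Definition up (x : T) : {set T} := [set z | (x <= z)%O].

Definition maxs (S : {set T}) : {set T} :=
  [set z in S | [forall w in S, (z <= w)%O ==> (w == z)]].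
Definition mins (S : {set T}) : {set T} :=
  [set z in S | [forall w in S, (w <= z)%O ==> (w == z)]].

Definition Dmeet (x y : T) : nat :=
  #|down x :&: down y| - \max_(z in maxs (down x :&: down y)) #|down z|.
(* D_join(x,y) = |ux ∩ uy| - min { |uz| : z in min(ux ∩ uy) }
   (the default #|T| of the min is an upper bound of every |uz|) *)
Definition Djoin (x y : T) : nat :=
  #|up x :&: up y| - \big[minn/#|T|]_(z in mins (up x :&: up y)) #|up z|.

Definition Delta_meet : nat := \max_(p : T * T) Dmeet p.1 p.2.
Definition Delta_join : nat := \max_(p : T * T) Djoin p.1 p.2.

Definition is_glb (x y m : T) : Prop :=
  (m <= x)%O /\ (m <= y)%O /\ forall z : T, (z <= x)%O -> (z <= y)%O -> (z <= m)%O.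
Definition is_lub (x y j : T) : Prop :=
  (x <= j)%O /\ (y <= j)%O /\ forall z : T, (x <= z)%O -> (y <= z)%O -> (j <= z)%O.
Definition is_lattice : Prop :=
  forall x y : T, (exists m, is_glb x y m) /\ (exists j, is_lub x y j).

Variable R : realDomainType.
Local Open Scope ring_scope.

Definition isotone (f : T -> R) : Prop := forall x y : T, (x <= y)%O -> f x <= f y.
Definition antitone (f : T -> R) : Prop := forall x y : T, (x <= y)%O -> f y <= f x.

(* sup / inf of f over a finite set; None encodes sup ∅ = -oo, resp. inf ∅ = +oo *)
Definition fsup (f : T -> R) (S : {set T}) : option R :=
  if [pick z in S] is Some z0 then Some (\big[Num.max/f z0]_(z in S) f z) else None.
Definition finf (f : T -> R) (S : {set T}) : option R :=
  if [pick z in S] is Some z0 then Some (\big[Num.min/f z0]_(z in S) f z) else None.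

(* the inequality  a + b <= lo + hi  where lo is a sup (None = -oo) and
   hi is an inf (None = +oo); the case -oo + (+oo) never arises below
   because of the nonemptiness hypotheses, and is set to False *)
Definition le_ext (a : R) (lo hi : option R) : Prop :=
  match lo, hi with
  | Some l, Some h => a <= l + h
  | Some _, None => True
  | None, _ => False
  end.
(* for antitone f: lo = inf over down-sets (None = +oo), hi = sup over up-sets *)
Definition le_ext_anti (a : R) (lo hi : option R) : Prop :=
  match lo, hi with
  | Some l, Some h => a <= l + h
  | None, Some _ => True
  | _, None => False
  end.

Definition iso_lower_valuation (v : T -> R) : Prop :=
  isotone v /\
  (forall x y : T, down x :&: down y != set0) /\
  (forall x y : T, le_ext (v x + v y) (fsup v (down x :&: down y))
                                      (finf v (up x :&: up y))).

Definition anti_lower_valuation (v : T -> R) : Prop :=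
  antitone v /\
  (forall x y : T, up x :&: up y != set0) /\
  (forall x y : T, le_ext_anti (v x + v y) (finf v (down x :&: down y))
                                           (fsup v (up x :&: up y))).

Definition lower_valuation (v : T -> R) : Prop :=
  iso_lower_valuation v \/ anti_lower_valuation v.

End PosetDefs.

(* Main.v *)
Require Import Defs.
From HB Require Import structures.
From mathcomp Require Import all_boot all_order all_algebra.
Set Implicit Arguments. Unset Strict Implicit. Unset Printing Implicit Defensive.
Import Order.TTheory GRing.Theory Num.Theory.

Section Gen.
Variable (R : realDomainType).
Variable (I : eqType).
Local Open Scope ring_scope.

Lemma bigmaxr_ge (F : I -> R) x0 (s : seq I) (P : pred I) z :
  z \in s -> P z -> F z <= \big[Num.max/x0]_(i <- s | P i) F i.
Proof.
elim: s => [//|a s IH]; rewrite in_cons big_cons => /orP [/eqP-> Pz|zs Pz].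
  by rewrite Pz le_max lexx.
case: (P a); last exact: IH.
by rewrite le_max IH ?orbT.
Qed.

Lemma bigminn_le (F : I -> nat) x0 (s : seq I) (P : pred I) z :
  z \in s -> P z -> (\big[minn/x0]_(i <- s | P i) F i <= F z)%N.
Proof.
elim: s => [//|a s IH]; rewrite in_cons big_cons => /orP [/eqP-> Pz|zs Pz].
  by rewrite Pz geq_minl.
case: (P a); last exact: IH.
by rewrite geq_min IH ?orbT.
Qed.
End Gen.

Section Main.
Variables (d : Order.disp_t) (T : finTBPOrderType d).

Lemma in_down (x z : T) : (z \in down x) = (z <= x)%O.
Proof. by rewrite inE. Qed.
Lemma in_up (x z : T) : (z \in up x) = (x <= z)%O.
Proof. by rewrite inE. Qed.

Lemma exmin (S : {set T}) (F : T -> nat) a : a \in S ->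
  exists2 z, z \in S & forall w, w \in S -> (F z <= F w)%N.
Proof.
move=> aS; case: (arg_minnP F aS) => z zS H; exists z => //.
Qed.

Lemma down_eq (a b : T) : down a \subset down b -> (#|down b| <= #|down a|)%N ->
  (b <= a)%O.
Proof.
move=> s c; have /eqP E : down a == down b by rewrite eqEcard s c.
by rewrite -in_down E in_down.
Qed.

Lemma up_eq (a b : T) : up a \subset up b -> (#|up b| <= #|up a|)%N ->
  (a <= b)%O.
Proof.
move=> s c; have /eqP E : up a == up b by rewrite eqEcard s c.
by rewrite -in_up E in_up.
Qed.

Lemma down_sub (a b : T) : (a <= b)%O -> down a \subset down b.
Proof. by move=> ab; apply/subsetP=> z; rewrite !in_down => /le_trans; apply. Qed.
Lemma up_sub (a b : T) : (a <= b)%O -> up b \subset up a.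
Proof. by move=> ab; apply/subsetP=> z; rewrite !in_up; apply: le_trans. Qed.

Lemma inI (x y z : T) : (z \in down x :&: down y) = (z <= x)%O && (z <= y)%O.
Proof. by rewrite inE !in_down. Qed.
Lemma inU (x y z : T) : (z \in up x :&: up y) = (x <= z)%O && (y <= z)%O.
Proof. by rewrite inE !in_up. Qed.

Lemma glb_Dmeet (x y m : T) : is_glb x y m -> Dmeet x y = 0%N.
Proof.
move=> [mx [my H]]; apply/eqP; rewrite /Dmeet subn_eq0.
have E : down x :&: down y = down m.
  apply/setP=> z; rewrite inI in_down; apply/idP/idP.
    by case/andP=> ??; apply: H.
  by move=> zm; rewrite (le_trans zm mx) (le_trans zm my).
rewrite E; apply: (@leq_bigmax_cond _ _ (fun z => #|down z|) m).
rewrite inE -E inI mx my /=; apply/forall_inP => w.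
rewrite inI => /andP [wx wy]; apply/implyP => mw; rewrite eq_le mw H //.
Qed.

Lemma lub_Djoin (x y m : T) : is_lub x y m -> Djoin x y = 0%N.
Proof.
move=> [mx [my H]]; apply/eqP; rewrite /Djoin subn_eq0.
have E : up x :&: up y = up m.
  apply/setP=> z; rewrite inU in_up; apply/idP/idP.
    by case/andP=> ??; apply: H.
  by move=> zm; rewrite (le_trans mx zm) (le_trans my zm).
rewrite E; apply: (big_ind (fun v => #|up m| <= v)%N).
- exact: max_card.
- by move=> a b ha hb; rewrite leq_min ha hb.
move=> z; rewrite inE => /andP [zm /forall_inP /(_ m)].
rewrite -E inU mx my => /(_ isT) /implyP; rewrite in_up in zm.
by move=> /(_ zm) /eqP <-; rewrite E.
Qed.

Lemma Dmeet_glb (x y : T) : Dmeet x y = 0%N -> exists m, is_glb x y m.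
Proof.
move/eqP; rewrite /Dmeet subn_eq0 => H.
have bI : (\bot%O : T) \in down x :&: down y by rewrite inI !le0x.
case: (posnP #|maxs (down x :&: down y)|) => [/card0_eq E0|pos].
  move: H; rewrite big_pred0 // leqn0 => /eqP/card0_eq/(_ \bot%O).
  by rewrite bI.
case: (eq_bigmax_cond (fun z => #|down z|) pos) => z zM E.
rewrite E in H; move: zM; rewrite inE => /andP [zI _].
move: (zI); rewrite inI => /andP [zx zy].
have S : down z \subset down x :&: down y.
  by apply/subsetP=> w; rewrite in_down inI => wz; rewrite !(le_trans wz).
have /eqP EE : down z == down x :&: down y by rewrite eqEcard S H.
exists z; split=> //; split=> // w wx wy.
by rewrite -in_down EE inI wx wy.
Qed.

Lemma Djoin_lub (x y : T) : Djoin x y = 0%N -> exists m, is_lub x y m.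
Proof.
move/eqP; rewrite /Djoin subn_eq0 => H.
have tU : (\top%O : T) \in up x :&: up y by rewrite inU !lex1.
case: (exmin (fun z => #|down z|) tU) => m mU mmin.
have mM : m \in mins (up x :&: up y).
  rewrite inE mU /=; apply/forall_inP => w wU; apply/implyP => wm.
  have := down_eq (down_sub wm) (mmin w wU).
  by move=> mw; rewrite eq_le wm mw.
have H2 := leq_trans H (bigminn_le (fun z => #|up z|) #|T| (mem_index_enum m) mM).
move: (mU); rewrite inU => /andP [xm ym].
have S : up m \subset up x :&: up y.
  by apply/subsetP=> w; rewrite in_up inU => wz; rewrite !(le_trans _ wz).
have /eqP EE : up m == up x :&: up y by rewrite eqEcard S H2.
exists m; split=> //; split=> // w wx wy.
by rewrite -in_up EE inU wx wy.
Qed.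

Lemma meets_lattice : (forall x y : T, exists m, is_glb x y m) -> is_lattice T.
Proof.
move=> G x y; split; first exact: G.
have tU : (\top%O : T) \in up x :&: up y by rewrite inU !lex1.
case: (exmin (fun z => #|down z|) tU) => j jU jmin.
move: (jU); rewrite inU => /andP [xj yj].
exists j; split=> //; split=> // u xu yu.
case: (G j u) => m [mj [mu H]].
have mU : m \in up x :&: up y by rewrite inU !H.
have := down_eq (down_sub mj) (jmin m mU).
by move=> jm; apply: le_trans mu.
Qed.

Lemma joins_lattice : (forall x y : T, exists m, is_lub x y m) -> is_lattice T.
Proof.
move=> G x y; split; last exact: G.
have bI : (\bot%O : T) \in down x :&: down y by rewrite inI !le0x.
case: (exmin (fun z => #|up z|) bI) => m mI mmin.
move: (mI); rewrite inI => /andP [mx my].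
exists m; split=> //; split=> // u ux uy.
case: (G m u) => j [mj [uj H]].
have jI : j \in down x :&: down y by rewrite inI !H.
have := up_eq (up_sub mj) (mmin j jI).
by move=> jm; apply: le_trans jm.
Qed.

Lemma Delta_meet0 : Delta_meet T = 0%N <-> forall x y : T, Dmeet x y = 0%N.
Proof.
split.
  move=> H x y; apply/eqP; rewrite -leqn0 -H.
  exact: (leq_bigmax_cond (F := fun p : T * T => Dmeet p.1 p.2) (x, y)).
move=> H; apply/eqP; rewrite -leqn0; apply/bigmax_leqP => p _; by rewrite H.
Qed.

Lemma Delta_join0 : Delta_join T = 0%N <-> forall x y : T, Djoin x y = 0%N.
Proof.
split.
  move=> H x y; apply/eqP; rewrite -leqn0 -H.
  exact: (leq_bigmax_cond (F := fun p : T * T => Djoin p.1 p.2) (x, y)).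
move=> H; apply/eqP; rewrite -leqn0; apply/bigmax_leqP => p _; by rewrite H.
Qed.

Lemma lattice_part :
  (is_lattice T <-> Delta_meet T = 0%N) /\ (Delta_meet T = 0%N <-> Delta_join T = 0%N).
Proof.
have L1 : is_lattice T -> Delta_meet T = 0%N /\ Delta_join T = 0%N.
  move=> L; split.
    by apply/Delta_meet0 => x y; case: (L x y) => [[m Hm] _]; apply: glb_Dmeet Hm.
  by apply/Delta_join0 => x y; case: (L x y) => [_ [m Hm]]; apply: lub_Djoin Hm.
have M : Delta_meet T = 0%N -> is_lattice T.
  by move/Delta_meet0 => H; apply: meets_lattice => x y; apply: Dmeet_glb.
have J : Delta_join T = 0%N -> is_lattice T.
  by move/Delta_join0 => H; apply: joins_lattice => x y; apply: Djoin_lub.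
split; split.
- by move/L1 => [].
- exact: M.
- by move/M/L1 => [].
- by move/J/L1 => [].
Qed.


Lemma mins_exists (S : {set T}) a : a \in S -> exists2 m, m \in mins S & m \in S.
Proof.
move=> aS; case: (exmin (fun z => #|down z|) aS) => m mS mmin.
exists m => //; rewrite inE mS /=; apply/forall_inP => w wS; apply/implyP => wm.
have := down_eq (down_sub wm) (mmin w wS).
by move=> mw; rewrite eq_le wm mw.
Qed.

Lemma Dmeet_zz (x y : T) : (Dmeet x y <= 1)%N ->
  exists2 zz, zz \in down x :&: down y & (#|down x :&: down y| <= #|down zz|.+1)%N.
Proof.
rewrite /Dmeet leq_subLR addn1 => H.
have bI : (\bot%O : T) \in down x :&: down y by rewrite inI !le0x.
case: (posnP #|maxs (down x :&: down y)|) => [/card0_eq E0|pos].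
  exists (\bot%O : T) => //; move: H; rewrite big_pred0 // => /leq_trans; apply; by [].
case: (eq_bigmax_cond (fun z => #|down z|) pos) => z zM E.
rewrite E in H; move: zM; rewrite inE => /andP [zI _].
by exists z.
Qed.

Lemma Djoin_zz (x y : T) : (Djoin x y <= 1)%N ->
  exists2 zz, zz \in up x :&: up y & (#|up x :&: up y| <= #|up zz|.+1)%N.
Proof.
rewrite /Djoin leq_subLR addn1 => H.
have tU : (\top%O : T) \in up x :&: up y by rewrite inU !lex1.
case: (mins_exists tU) => m mM mU; exists m => //.
apply: (leq_trans H); rewrite ltnS.
exact: (bigminn_le (fun z => #|up z|) #|T| (mem_index_enum m) mM).
Qed.

Lemma core_b (x y u zz : T) : (x <= u)%O -> (y <= u)%O ->
  zz \in down x :&: down y -> (#|down x :&: down y| <= #|down zz|.+1)%N ->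
  exists2 z, z \in down x :&: down y & (#|down x| + #|down y| <= #|down z| + #|down u|)%N.
Proof.
move=> xu yu zzI Hzz.
case: (boolP (u \in down x :|: down y)).
  rewrite inE !in_down => /orP [ux|uy].
    have E : u = x by apply/eqP; rewrite eq_le ux xu.
    subst u; exists y; first by rewrite inI lexx yu.
    by rewrite addnC.
  have E : u = y by apply/eqP; rewrite eq_le uy yu.
  subst u; exists x; first by rewrite inI lexx xu.
  by [].
move=> uN; exists zz => //.
have h1 : (#|down x :|: down y|.+1 <= #|down u|)%N.
  have := cardsU1 u (down x :|: down y); rewrite uN add1n => <-.
  apply: subset_leq_card; apply/subsetP => w; rewrite !inE.
  case/or3P => [/eqP->|wx|wy]; first exact: lexx.
    exact: le_trans xu.
  exact: le_trans yu.
have := leq_add h1 Hzz; rewrite addSn addnS ltnS cardsUI.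
by rewrite (addnC #|down zz|).
Qed.

Lemma core_c (x y z zz : T) : (z <= x)%O -> (z <= y)%O ->
  zz \in up x :&: up y -> (#|up x :&: up y| <= #|up zz|.+1)%N ->
  exists2 w, w \in up x :&: up y & (#|up x| + #|up y| <= #|up z| + #|up w|)%N.
Proof.
move=> zx zy zzU Hzz.
case: (boolP (z \in up x :|: up y)).
  rewrite inE !in_up => /orP [xz|yz].
    have E : z = x by apply/eqP; rewrite eq_le xz zx.
    subst z; exists y; first by rewrite inU lexx zy.
    by [].
  have E : z = y by apply/eqP; rewrite eq_le yz zy.
  subst z; exists x; first by rewrite inU lexx zx.
  by rewrite addnC.
move=> zN; exists zz => //.
have h1 : (#|up x :|: up y|.+1 <= #|up z|)%N.
  have := cardsU1 z (up x :|: up y); rewrite zN add1n => <-.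
  apply: subset_leq_card; apply/subsetP => w; rewrite !inE.
  case/or3P => [/eqP->|wx|wy]; first exact: lexx.
    exact: le_trans wx.
  exact: le_trans wy.
have := leq_add h1 Hzz; rewrite addSn addnS ltnS cardsUI.
by [].
Qed.

End Main.

Section Real.
Variables (d : Order.disp_t) (T : finTBPOrderType d) (R : realDomainType).
Local Open Scope ring_scope.

Lemma part_b : (Delta_meet T <= 1)%N ->
  iso_lower_valuation (fun x : T => (#|down x|%:R)%R : R).
Proof.
move=> HD.
have HDm : forall x y : T, (Dmeet x y <= 1)%N.
  move=> x y; apply: leq_trans HD.
  exact: (leq_bigmax_cond (F := fun p : T * T => Dmeet p.1 p.2) (x, y)).
split; [|split].
- by move=> x y xy; rewrite ler_nat; apply: subset_leq_card; apply: down_sub.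
- by move=> x y; apply/set0Pn; exists (\bot%O : T); rewrite inI !le0x.
move=> x y; rewrite /le_ext /fsup /finf.
case: pickP => [z0 Hz0|/(_ \bot%O)]; last by rewrite inI !le0x.
case: pickP => [u0 Hu0|/(_ \top%O)]; last by rewrite inU !lex1.
set M := \big[Num.max/_]_(_ in _) _.
have key : forall u : T, u \in up x :&: up y ->
    #|down x|%:R + #|down y|%:R - M <= #|down u|%:R :> R.
  move=> u; rewrite inU => /andP [xu yu].
  case: (Dmeet_zz (HDm x y)) => zz zzI Hzz.
  case: (core_b xu yu zzI Hzz) => z zI H.
  rewrite lerBlDl; apply: (le_trans (y := #|down z|%:R + #|down u|%:R)).
    by rewrite -!natrD ler_nat.
  rewrite lerD2r /M; apply: (bigmaxr_ge (fun z : T => #|down z|%:R)) => //; exact: mem_index_enum.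
rewrite -lerBlDl.
apply: (big_ind (fun v => _ - M <= v)).
- exact: key.
- by move=> a b ha hb; rewrite le_min ha hb.
- exact: key.
Qed.

Lemma part_c : (Delta_join T <= 1)%N ->
  anti_lower_valuation (fun x : T => (#|up x|%:R)%R : R).
Proof.
move=> HD.
have HDj : forall x y : T, (Djoin x y <= 1)%N.
  move=> x y; apply: leq_trans HD.
  exact: (leq_bigmax_cond (F := fun p : T * T => Djoin p.1 p.2) (x, y)).
split; [|split].
- by move=> x y xy; rewrite ler_nat; apply: subset_leq_card; apply: up_sub.
- by move=> x y; apply/set0Pn; exists (\top%O : T); rewrite inU !lex1.
move=> x y; rewrite /le_ext_anti /fsup /finf.
case: pickP => [z0 Hz0|/(_ \bot%O)]; last by rewrite inI !le0x.
case: pickP => [u0 Hu0|/(_ \top%O)]; last by rewrite inU !lex1.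
set M := \big[Num.max/_]_(_ in _) _.
have key : forall z : T, z \in down x :&: down y ->
    #|up x|%:R + #|up y|%:R - M <= #|up z|%:R :> R.
  move=> z; rewrite inI => /andP [zx zy].
  case: (Djoin_zz (HDj x y)) => zz zzU Hzz.
  case: (core_c zx zy zzU Hzz) => w wU H.
  rewrite lerBlDl; apply: (le_trans (y := #|up z|%:R + #|up w|%:R)).
    by rewrite -!natrD ler_nat.
  rewrite addrC lerD2r /M; apply: (bigmaxr_ge (fun z : T => #|up z|%:R)) => //.
  exact: mem_index_enum.
rewrite -lerBlDr.
apply: (big_ind (fun v => _ - M <= v)).
- exact: key.
- by move=> a b ha hb; rewrite le_min ha hb.
- exact: key.
Qed.


End Real.

Theorem mainTheorem8 (d : Order.disp_t) (P : finTBPOrderType d) :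
  ((is_lattice P <-> Delta_meet P = 0%N) /\ (Delta_meet P = 0%N <-> Delta_join P = 0%N)) /\
  (forall R : realDomainType, (Delta_meet P <= 1)%N ->
     iso_lower_valuation (fun x : P => (#|down x|%:R)%R : R)) /\
  (forall R : realDomainType, (Delta_join P <= 1)%N ->
     anti_lower_valuation (fun x : P => (#|up x|%:R)%R : R)).
Proof.
split; first exact: lattice_part.
split => R; [exact: part_b | exact: part_c].
Qed.
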